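(* Let $P_n$ be the path with $n$ vertices. (i) If $0\leq \alpha < \frac{1}{2}$, then for $1\leq k\leq n$, $$S_k(A_{\alpha}(P_n)) \leq 2\alpha k+\alpha-1+\alpha \csc\frac{\pi}{2n} \sin\frac{(2k+1)\pi}{2n} +(1-2\alpha)\csc\frac{\pi}{2(n+1)} \sin\frac{(2k+1)\pi}{2(n+1)}.$$ (ii) If $\frac{1}{2}\leq \alpha \leq 1$, then for $1\leq k\leq n$, $$S_k(A_{\alpha}(P_n))\leq 2\alpha k+(1-\alpha)\left(\csc\frac{\pi}{2n} \sin\frac{(2k+1)\pi}{2n}-1\right).$$
   Context: $A_{\alpha}(G)=\alpha D(G)+(1-\alpha)A(G)$, where $A(G)$ is the adjacency matrix and $D(G)$ the diagonal degree matrix. For a real symmetric matrix $M$ with eigenvalues $\lambda_1(M)\geq\cdots\geq\lambda_n(M)$, $S_k(M)=\sum_{i=1}^k\lambda_i(M)$. *)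

(* Defs.v *)
From HB Require Import structures.
From mathcomp Require Import all_boot all_order all_algebra.
From mathcomp Require Import reals trigo.
Set Implicit Arguments. Unset Strict Implicit. Unset Printing Implicit Defensive.
Import Order.TTheory GRing.Theory Num.Theory.
Local Open Scope ring_scope.

Definition path_adj (R : realType) (n : nat) : 'M[R]_n :=
  \matrix_(i < n, j < n) ((i.+1 == j :> nat) || (j.+1 == i :> nat))%:R.

Definition deg_mx (R : realType) (n : nat) (A : 'M[R]_n) : 'M[R]_n :=
  diag_mx (\row_(i < n) \sum_(j < n) A i j).

Definition A_alpha (R : realType) (n : nat) (alpha : R) (A : 'M[R]_n) : 'M[R]_n :=
  alpha *: deg_mx A + (1 - alpha) *: A.

(* s is the list of eigenvalues of M (with multiplicity), in nonincreasing
   order lambda_1 >= ... >= lambda_n: the characteristic polynomial splits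
   over R with roots exactly the entries of s. *)
Definition eigen_list (R : realType) (n : nat) (M : 'M[R]_n) (s : seq R) : Prop :=
  sorted (fun x y : R => y <= x) s /\
  char_poly M = \prod_(x <- s) ('X - x%:P).

Definition S_k (R : realType) (k : nat) (s : seq R) : R := \sum_(i < k) s`_i.

Definition csc (R : realType) (x : R) : R := (sin x)^-1.

(* Main.v *)
Set Warnings "-notation-overridden,-ambiguous-paths,-deprecated".
Require Import Defs.
From HB Require Import structures.
From mathcomp Require Import all_boot all_order all_algebra.
From mathcomp Require Import reals trigo.
From mathcomp Require Import complex.
From mathcomp Require Import ring lra.
Import Order.TTheory GRing.Theory Num.Theory.
Local Open Scope ring_scope.
From mathcomp Require Import spectral perm.
Section Gen.
Variable C : numDomainType.

Lemma sum_ind_lt n k : (k <= n)%N ->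
  \sum_(j < n) ((j < k)%N%:R : C) = k%:R.
Proof.
move=> kn; have -> : \sum_(j < n) ((j < k)%N%:R : C) = \sum_(j < n | (j < k)%N) 1.
  by rewrite [RHS]big_mkcond; apply: eq_bigr => j _; case: ifP.
by rewrite -(big_ord_widen n (fun _ => (1:C)) kn) sumr_const card_ord.
Qed.

Lemma sort_lemma n k (m r : 'I_n -> C) c : (k <= n)%N ->
  (forall j, 0 <= r j <= 1) -> \sum_j r j = k%:R ->
  (forall j : 'I_n, (j < k)%N -> c <= m j) ->
  (forall j : 'I_n, (k <= j)%N -> m j <= c) ->
  \sum_j m j * r j <= \sum_(j < n | (j < k)%N) m j.
Proof.
move=> kn r01 rs mlo mhi.
rewrite -subr_ge0 big_mkcond /=.
have -> : \sum_(i < n) (if (i < k)%N then m i else 0) = \sum_(j < n) m j * ((j < k)%N%:R).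
  by apply: eq_bigr => j _; case: ifP; rewrite ?mulr1 ?mulr0.
rewrite -sumrB.
have -> : \sum_(j < n) (m j * ((j < k)%N%:R) - m j * r j) =
   \sum_(j < n) (m j - c) * ((j < k)%N%:R - r j) + c * (\sum_(j < n) ((j < k)%N%:R : C) - \sum_j r j).
  rewrite mulrBr !mulr_sumr -sumrB -big_split /=. apply: eq_bigr => j _; ring.
rewrite sum_ind_lt // rs subrr mulr0 addr0 sumr_ge0 // => j _.
have /andP[r0 r1] := r01 j.
case: ltnP => jk.
  by rewrite mulr_ge0 // ?subr_ge0 ?mlo.
by rewrite add0r mulr_le0 // ?subr_le0 ?mhi // oppr_le0.
Qed.
End Gen.

Section KF.
Variable C : numClosedFieldType.
Local Open Scope sesquilinear_scope.

Lemma trmxC_mul m n p (A : 'M[C]_(m, n)) (B : 'M[C]_(n, p)) :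
  (A *m B)^t* = B^t* *m A^t*.
Proof. by rewrite trmx_mul map_mxM. Qed.

Lemma P_props n k (Y : 'M[C]_(k, n)) : Y *m Y^t* = 1%:M ->
  let P := Y^t* *m Y in
  (forall j, 0 <= P j j <= 1) /\ \sum_j P j j = k%:R.
Proof.
move=> YY P.
have Pjl j l : P j l = \sum_c (Y c j)^* * Y c l.
  by rewrite !mxE; apply: eq_bigr => c _; rewrite !mxE.
have Pge0 j : 0 <= P j j.
  by rewrite Pjl sumr_ge0 // => c _; rewrite mulrC mul_conjC_ge0.
have Pc j l : P l j = (P j l)^*.
  rewrite !Pjl rmorph_sum; apply: eq_bigr => c _.
  by rewrite rmorphM /= conjCK mulrC.
have PP : P *m P = P.
  by rewrite /P mulmxA -[Y^t* *m Y *m Y^t*]mulmxA YY mulmx1.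
split; last first.
  by rewrite -/(\tr P) /P mxtrace_mulC YY mxtrace1.
move=> j; rewrite Pge0 /=.
have H : P j j * P j j <= P j j.
  have E : P j j = \sum_l P j l * P l j by rewrite -[in LHS]PP mxE.
  rewrite [leRHS]E [leRHS](bigD1 j) //= lerDl.
  by apply: sumr_ge0 => l _; rewrite (Pc j l) mul_conjC_ge0.
have [->|nz] := eqVneq (P j j) 0; first by rewrite ler01.
have pos : 0 < P j j by rewrite lt_def nz Pge0.
by rewrite -(ler_pM2l pos) mulr1.
Qed.

Lemma KF n k (B W : 'M[C]_n) (mu : 'rV[C]_n) (V : 'M[C]_(k, n)) c :
  W *m W^t* = 1%:M -> W *m B = diag_mx mu *m W -> V *m V^t* = 1%:M ->
  (k <= n)%N ->
  (forall j : 'I_n, (j < k)%N -> c <= mu 0 j) ->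
  (forall j : 'I_n, (k <= j)%N -> mu 0 j <= c) ->
  \tr (V *m B *m V^t*) <= \sum_(j < n | (j < k)%N) mu 0 j.
Proof.
move=> WW WB VV kn mlo mhi.
have WtW : W^t* *m W = 1%:M by apply: mulmx1C.
have HB : B = W^t* *m diag_mx mu *m W by rewrite -mulmxA -WB mulmxA WtW mul1mx.
set Y := V *m W^t*.
have HYt : Y^t* = W *m V^t* by rewrite /Y trmxC_mul trmxCK.
have YY : Y *m Y^t* = 1%:M.
  by rewrite HYt /Y mulmxA -[V *m W^t* *m W]mulmxA WtW mulmx1.
have [P01 Psum] := @P_props n k Y YY.
have -> : \tr (V *m B *m V^t*) = \sum_j mu 0 j * (Y^t* *m Y) j j.
  have -> : V *m B *m V^t* = Y *m (diag_mx mu *m Y^t*).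
    by rewrite HYt /Y HB !mulmxA.
  rewrite mxtrace_mulC -mulmxA /mxtrace; apply: eq_bigr => j _.
  by rewrite mul_diag_mx mxE.
by apply: (@sort_lemma _ n k (fun j => mu 0 j) (fun j => (Y^t* *m Y) j j) c).
Qed.
End KF.

Lemma char_poly_sim (F : fieldType) n (P A : 'M[F]_n) : P \in unitmx ->
  char_poly (invmx P *m A *m P) = char_poly A.
Proof.
move=> Pu; rewrite /char_poly /char_poly_mx.
have -> : 'X%:M - map_mx polyC (invmx P *m A *m P) =
   map_mx polyC (invmx P) *m ('X%:M - map_mx polyC A) *m map_mx polyC P.
  rewrite mulmxBr mulmxBl !map_mxM; congr (_ - _).
  by rewrite mul_mx_scalar -scalemxAl -map_mxM mulVmx // map_mx1 scalemx1.
by rewrite !det_mulmx mulrAC -det_mulmx -map_mxM mulVmx // map_mx1 det1 mul1r.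
Qed.

Section KF2.
Variable C : numClosedFieldType.
Local Open Scope sesquilinear_scope.

Lemma Deg_bound n k (d : 'rV[C]_n) (V : 'M[C]_(k, n)) :
  (forall j, d 0 j <= 2) -> V *m V^t* = 1%:M ->
  \tr (V *m diag_mx d *m V^t*) <= 2 * k%:R.
Proof.
move=> d2 VV; have [P01 Psum] := @P_props C n k V VV.
rewrite -mulmxA mxtrace_mulC -mulmxA /mxtrace -Psum mulr_sumr.
apply: ler_sum => j _; rewrite mul_diag_mx mxE.
have /andP[p0 _] := P01 j.
by rewrite ler_wpM2r.
Qed.

Lemma select_rows n k (U M : 'M[C]_n) (d : 'rV[C]_n) (sigma : 'I_k -> 'I_n) :
  U *m U^t* = 1%:M -> U *m M = diag_mx d *m U -> injective sigma ->
  let V := \matrix_(i < k, j < n) U (sigma i) j in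
  V *m V^t* = 1%:M /\ \tr (V *m M *m V^t*) = \sum_(i < k) d 0 (sigma i).
Proof.
move=> UU UM inj V.
have E (X : 'M[C]_n) a b : (V *m X *m V^t*) a b = (U *m X *m U^t*) (sigma a) (sigma b).
  rewrite !mxE; apply: eq_bigr => j _; rewrite !mxE; congr (_ * _).
  by apply: eq_bigr => l _; rewrite !mxE.
have UMU : U *m M *m U^t* = diag_mx d by rewrite UM -mulmxA UU mulmx1.
split.
  apply/matrixP => a b; have := E 1%:M a b; rewrite !mulmx1 => ->; rewrite UU !mxE.
  by rewrite (inj_eq inj).
by rewrite /mxtrace; apply: eq_bigr => i _; rewrite E UMU mxE eqxx mulr1n.
Qed.
End KF2.
Section OrthBasis.
Variable R : rcfType.

Lemma orth_basis n (B : 'M[R]_n) (y : 'I_n -> 'rV[R]_n) (mu : 'I_n -> R) :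
  B^T = B -> (forall j, y j *m B = mu j *: y j) -> injective mu ->
  (forall j, y j != 0) ->
  exists W : 'M[R]_n, W *m W^T = 1%:M /\ W *m B = diag_mx (\row_j mu j) *m W.
Proof.
move=> Bsym Hy muinj ynz.
pose g j l := (y j *m (y l)^T) 0 0.
have gE j l : g j l = \sum_i y j 0 i * y l 0 i.
  by rewrite /g mxE; apply: eq_bigr => i _; rewrite mxE.
have orth j l : j != l -> g j l = 0.
  move=> jl.
  have e1 : y j *m B *m (y l)^T = mu j *: (y j *m (y l)^T) by rewrite Hy scalemxAl.
  have e2 : y j *m B *m (y l)^T = mu l *: (y j *m (y l)^T).
    by rewrite -mulmxA -{1}Bsym -trmx_mul Hy linearZ /= scalemxAr.
  have h : mu j * g j l = mu l * g j l.
    have /matrixP/(_ 0 0) := etrans (esym e1) e2.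
    by rewrite !mxE /g !mxE.
  have : (mu j - mu l) * g j l = 0 by rewrite mulrBl h subrr.
  move/eqP; rewrite mulf_eq0 subr_eq0 => /orP[/eqP/muinj/eqP|/eqP //].
  by rewrite (negPf jl).
have gpos j : 0 < g j j.
  rewrite gE lt_def psumr_eq0 => [|i _]; last by rewrite -expr2 sqr_ge0.
  rewrite sumr_ge0 ?andbT => [|i _]; last by rewrite -expr2 sqr_ge0.
  apply/negP => /allP H; move: (ynz j) => /negP; apply; apply/eqP/rowP => i.
  have := H i (mem_index_enum _); rewrite mxE /= mulf_eq0 orbb => /eqP ->.
  by [].
pose W := \matrix_(j, i) (y j 0 i / Num.sqrt (g j j)).
exists W; split.
  apply/matrixP => j l; rewrite !mxE.
  have -> : \sum_i W j i * W^T i l = g j l / (Num.sqrt (g j j) * Num.sqrt (g l l)).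
    rewrite gE mulr_suml; apply: eq_bigr => i _; rewrite !mxE.
    by rewrite invfM; ring.
  have [<-|jl] := eqVneq j l.
    by rewrite -expr2 sqr_sqrtr ?ltW // divff // gt_eqF.
  by rewrite orth // mul0r.
apply/matrixP => j i.
rewrite mul_diag_mx !mxE.
have -> : \sum_l W j l * B l i = (y j *m B) 0 i / Num.sqrt (g j j).
  rewrite [(y j *m B) 0 i]mxE mulr_suml; apply: eq_bigr => l _; rewrite !mxE.
  by ring.
by rewrite Hy !mxE mulrA.
Qed.
End OrthBasis.
Section Trig.
Variable R : realType.

Lemma sin_natpi (m : nat) : sin (m%:R * pi) = 0 :> R.
Proof.
have := alternatingn (@sinDpi R) m 0.
by rewrite add0r sin0 mulr0 mulr_natl.
Qed.

Lemma sin3 (x t : R) : sin (x - t) + sin (x + t) = 2 * cos t * sin x.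
Proof. rewrite sinB sinD. ring. Qed.

Lemma sin3' (x t : R) : sin (x + t) - sin (x - t) = 2 * cos x * sin t.
Proof. rewrite sinB sinD. ring. Qed.

Lemma cos_le (x y : R) : 0 <= x -> x <= y -> y <= pi -> cos y <= cos x.
Proof.
move=> x0 xy ypi.
have [->//|xy'] := eqVneq x y.
have lt : x < y by rewrite lt_def eq_sym xy' xy.
apply: ltW; rewrite ltr_cos //; rewrite in_itv /= ?x0 ?ypi ?andbT //.
- by rewrite (le_trans xy).
- by rewrite (le_trans x0).
Qed.

Lemma trig_sum (b : R) k : sin b != 0 ->
  \sum_(j < k) 2 * cos (j.+1%:R * (2 * b)) = sin ((2 * k%:R + 1) * b) / sin b - 1.
Proof.
move=> sb; elim: k => [|k IH].
  by rewrite big_ord0 mulr0 add0r mul1r divff // subrr.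
rewrite big_ord_recr /= IH.
have E : 2 * cos (k.+1%:R * (2 * b)) =
   (sin (k.+1%:R * (2 * b) + b) - sin (k.+1%:R * (2 * b) - b)) / sin b.
  by rewrite sin3' mulfK.
rewrite E -[k.+1%:R]natr1; set K := (k%:R : R).
have -> : (2 * (K + 1) + 1) * b = (K + 1) * (2 * b) + b by ring.
have -> : (2 * K + 1) * b = (K + 1) * (2 * b) - b by ring.
ring.
Qed.
End Trig.

Section Path.
Variable R : realType.

Lemma sum_eq_ind (f : nat -> R) n c :
  \sum_(l < n) f l * (l == c :> nat)%:R = (c < n)%:R * f c.
Proof.
elim: n => [|n IH]; first by rewrite big_ord0 ltn0 mul0r.
rewrite big_ord_recr /= IH ltnS.
by case: (ltngtP c n) => [_|_|->]; rewrite ?mulr0 ?mul0r ?addr0 ?add0r ?mulr1 ?mul1r.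
Qed.

Lemma adj_sum (f : nat -> R) n (i : nat) : (i < n)%N ->
  \sum_(l < n) f l * ((l.+1 == i) || (i.+1 == l))%:R =
  (0 < i)%:R * f i.-1 + (i.+1 < n)%:R * f i.+1.
Proof.
move=> iltn.
have -> : \sum_(l < n) f l * ((l.+1 == i) || (i.+1 == l))%:R =
   \sum_(l < n) f l * (l.+1 == i)%:R + \sum_(l < n) f l * (l == i.+1 :> nat)%:R.
  rewrite -big_split /=; apply: eq_bigr => l _; rewrite -mulrDr eq_sym.
  case: (eqVneq l.+1 i) => [<-|_].
    by rewrite (@ltn_eqF l l.+2) // addr0.
  by rewrite add0r eq_sym.
rewrite sum_eq_ind; congr (_ + _).
case: i iltn => [|i] iltn; first by rewrite mul0r big1 // => l _; rewrite mulr0.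
rewrite mul1r.
have := sum_eq_ind f n i; rewrite (ltnW iltn) mul1r => <-.
by apply: eq_bigr => l _; rewrite eqSS.
Qed.

Lemma adj_sym n : (path_adj R n)^T = path_adj R n.
Proof. by apply/matrixP => i j; rewrite !mxE orbC. Qed.

Lemma yN n (f : nat -> R) (i : 'I_n) :
  ((\row_(l < n) f l) *m path_adj R n) 0 i =
  (0 < i)%:R * f i.-1 + (i.+1 < n)%:R * f i.+1.
Proof.
rewrite mxE -adj_sum //; by apply: eq_bigr => l _; rewrite !mxE.
Qed.

Lemma degE n (i : 'I_n) :
  \sum_(j < n) path_adj R n i j = (0 < i)%:R + (i.+1 < n)%:R.
Proof.
have := @adj_sum (fun _ => 1) n i (ltn_ord i); rewrite !mulr1 => <-.
by apply: eq_bigr => l _; rewrite mxE mul1r orbC.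
Qed.

Lemma yD n (f : nat -> R) (i : 'I_n) :
  ((\row_(l < n) f l) *m deg_mx (path_adj R n)) 0 i =
  f i * ((0 < i)%:R + (i.+1 < n)%:R).
Proof. by rewrite /deg_mx mul_mx_diag !mxE degE. Qed.

Lemma coef_lo (F : nat -> R) (i : nat) : F 0 = 0 ->
  (0 < i)%:R * F i = F i.
Proof. by case: i => [|i] F0; rewrite ?mul0r ?F0 ?mul1r. Qed.

Lemma coef_hi (F : nat -> R) n (i : nat) : (i < n)%N -> F n.+1 = 0 ->
  (i.+1 < n)%:R * F i.+2 = F i.+2.
Proof.
move=> iltn Fn; case: ltnP => h; first by rewrite mul1r.
have -> : i.+1 = n by apply/eqP; rewrite eqn_leq iltn h.
by rewrite Fn mulr0.
Qed.

Lemma eigA n (j : 'I_n) :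
  let t := j.+1%:R * (2 * (pi / (2 * (n%:R + 1)))) in
  (\row_(l < n) sin (l.+1%:R * t)) *m path_adj R n =
  (2 * cos t) *: \row_(l < n) sin (l.+1%:R * t).
Proof.
move=> t; apply/rowP => i.
rewrite (yN _ (fun l : nat => sin (l.+1%:R * t))) !mxE.
pose F := fun m : nat => sin (m%:R * t).
have F0 : F 0 = 0 by rewrite /F mul0r sin0.
have Fn : F n.+1 = 0.
  rewrite /F; have -> : n.+1%:R * t = j.+1%:R * pi.
    rewrite /t -[n.+1%:R]natr1; field.
    by rewrite natr1 pnatr_eq0.
  exact: (sin_natpi R j.+1).
have e1 : (0 < i)%:R * sin (i.-1.+1%:R * t) = F i.
  by rewrite -(coef_lo F i F0); case: (nat_of_ord i) => [|m]; rewrite ?mul0r.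
rewrite e1 (coef_hi F n i (ltn_ord i) Fn) /F.
rewrite -sin3; congr (sin _ + sin _); rewrite -!natr1; ring.
Qed.

Lemma eigQ n (j : 'I_n) :
  let a := j.+1%:R * (pi / (2 * n%:R)) in
  (\row_(l < n) sin ((2 * l%:R + 1) * a)) *m (deg_mx (path_adj R n) + path_adj R n) =
  (2 + 2 * cos (2 * a)) *: \row_(l < n) sin ((2 * l%:R + 1) * a).
Proof.
move=> a; apply/rowP => i.
rewrite mulmxDr mxE (yD _ (fun l : nat => sin ((2 * l%:R + 1) * a))).
rewrite (yN _ (fun l : nat => sin ((2 * l%:R + 1) * a))) !mxE.
pose G := fun m : nat => sin (2 * m%:R * a - a).
have Gf (l : nat) : sin ((2 * l%:R + 1) * a) = G l.+1.
  by rewrite /G -natr1; congr sin; ring.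
rewrite !Gf.
have n0 : (0 < n)%N by apply: leq_ltn_trans (ltn_ord j).
have H0 : G 0 + G 1 = 0.
  rewrite /G; have -> : 2 * 0%:R * a - a = - a by ring.
  have -> : 2 * 1%:R * a - a = a by ring.
  by rewrite sinN addNr.
have Hn : G n + G n.+1 = 0.
  rewrite /G -[n.+1%:R]natr1.
  have -> : 2 * (n%:R + 1) * a - a = 2 * n%:R * a + a by ring.
  rewrite sin3.
  have -> : 2 * n%:R * a = j.+1%:R * pi.
    by rewrite /a; field; rewrite pnatr_eq0 -lt0n.
  by rewrite sin_natpi mulr0.
have e1 : (0 < i)%:R * G i.-1.+1 = (0 < i)%:R * G i.
  by case: (nat_of_ord i) => [|m]; rewrite ?mul0r.
rewrite e1.
pose H := fun m : nat => G m + G m.+1.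
have E : G i.+1 * ((0 < i)%:R + (i.+1 < n)%:R) + ((0 < i)%:R * G i + (i.+1 < n)%:R * G i.+2)
   = (0 < i)%:R * H i + (i.+1 < n)%:R * H i.+1 by rewrite /H; ring.
rewrite E (coef_lo H i H0).
have -> : (i.+1 < n)%:R * H i.+1 = H i.+1.
  exact: (coef_hi (fun m => H m.-1) n i (ltn_ord i) Hn).
rewrite /H.
have -> : G i + G i.+1 + (G i.+1 + G i.+2) = 2 * G i.+1 + (G i + G i.+2) by ring.
have -> : G i + G i.+2 = 2 * cos (2 * a) * G i.+1.
  rewrite /G -sin3; congr (sin _ + sin _); rewrite -!natr1; ring.
ring.
Qed.
End Path.
Section Cx.
Variable R : realType.
Local Notation C := (R[i]).
Local Open Scope sesquilinear_scope.
Notation toC := (real_complex R).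
Definition mC m p (A : 'M[R]_(m, p)) : 'M[C]_(m, p) := map_mx toC A.
Arguments mC {m p}.

Lemma toC_real (x : R) : toC x \is Num.real.
Proof. by apply/complex_realP; exists x. Qed.

Lemma mC_tC m p (A : 'M[R]_(m, p)) : (mC A)^t* = mC A^T.
Proof. by apply/matrixP => i j; rewrite !mxE conj_Creal // toC_real. Qed.

Lemma KF_real n k (B : 'M[R]_n) (y : 'I_n -> 'rV[R]_n) (mu : nat -> R)
    (V : 'M[C]_(k, n)) :
  B^T = B -> (forall j : 'I_n, y j *m B = mu j *: y j) ->
  (forall i j : 'I_n, mu i = mu j -> i = j) -> (forall j, y j != 0) ->
  (forall i j : nat, (i <= j)%N -> (j < n)%N -> mu j <= mu i) ->
  V *m V^t* = 1%:M -> (0 < k <= n)%N ->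
  \tr (V *m mC B *m V^t*) <= toC (\sum_(j < k) mu j).
Proof.
move=> Bsym Hy inj ynz mono VV /andP[k0 kn].
have [W [WW WB]] := @orth_basis R n B y (fun j => mu j) Bsym Hy (fun i j => inj i j) ynz.
have WWC : mC W *m (mC W)^t* = 1%:M by rewrite mC_tC /mC -map_mxM WW map_mx1.
have WBC : mC W *m mC B = diag_mx (mC (\row_j mu j)) *m mC W.
  by rewrite /mC -map_mxM WB map_mxM map_diag_mx.
have := @KF C n k (mC B) (mC W) (mC (\row_j mu j)) V (toC (mu k.-1)) WWC WBC VV kn.
rewrite rmorph_sum (big_ord_widen n (fun j => toC (mu j)) kn).
have E : \sum_(i < n | (i < k)%N) (mC (\row_j mu j)) 0 i = \sum_(i < n | (i < k)%N) toC (mu i).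
  by apply: eq_bigr => i _; rewrite !mxE.
rewrite E; apply.
- move=> j jk; rewrite !mxE lecR; apply: mono.
    by rewrite -ltnS prednK.
  by move: k0 kn; case: (k).
- move=> j kj; rewrite !mxE lecR; apply: mono => //.
  by rewrite (leq_trans (leq_pred k)).
Qed.
End Cx.
Arguments mC {R m p}.
Section Spec.
Variable R : realType.
Local Notation C := (R[i]).
Local Open Scope sesquilinear_scope.
Notation toC := (real_complex R).

Lemma exists_V n k (M : 'M[R]_n) (s : seq R) : M^T = M ->
  char_poly M = \prod_(x <- s) ('X - x%:P) -> (k <= n)%N ->
  exists V : 'M[C]_(k, n),
    V *m V^t* = 1%:M /\ \tr (V *m mC M *m V^t*) = toC (\sum_(i < k) s`_i).
Proof.
move=> Msym Hc kn.
set MC := mC M.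
have Mh : MC^t* = MC by rewrite /MC mC_tC Msym.
have Mnorm : MC \is normalmx by apply/normalmxP; rewrite Mh.
have /orthomx_spectralP Hsp := Mnorm.
set U := spectralmx MC in Hsp; set d := spectral_diag MC in Hsp.
have Uu : U \in unitmx by apply: spectral_unit.
have UU : U *m U^t* = 1%:M by apply/unitarymxP/spectral_unitarymx.
have UM : U *m MC = diag_mx d *m U.
  by rewrite {1}Hsp !mulmxA mulmxV // mul1mx.
have Hcp : char_poly MC = \prod_(i < n) ('X - (d 0 i)%:P).
  rewrite Hsp char_poly_sim // char_poly_trig ?diag_mx_is_trig //.
  by apply: eq_bigr => i _; rewrite mxE eqxx mulr1n.
have Hcp2 : char_poly MC = \prod_(x <- map toC s) ('X - x%:P).
  rewrite /MC /mC -map_char_poly Hc rmorph_prod big_map.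
  by apply: eq_bigr => x _; rewrite /= map_polyXsubC.
pose t := [tuple d 0 i | i < n].
have : perm_eq (map toC s) t.
  apply: prod_XsubC_eq; rewrite -Hcp2 Hcp big_tuple.
  by apply: eq_bigr => i _; rewrite tnth_mktuple.
case/perm.tuple_permP => p Hp.
pose sigma := fun i : 'I_k => p (widen_ord kn i).
have sinj : injective sigma.
  by move=> i j /perm.perm_inj /(congr1 val) /= /val_inj.
have [VV Htr] := @select_rows C n k U MC d sigma UU UM sinj.
eexists; split; first exact: VV.
rewrite Htr rmorph_sum; apply: eq_bigr => i _.
have sz : size s = n by rewrite -(size_map toC) Hp size_tuple.
have iltn : (i < size s)%N by rewrite sz (leq_trans (ltn_ord i) kn).
transitivity ((map toC s)`_i); last by rewrite (nth_map 0 0).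
rewrite Hp /=.
rewrite (nth_map (widen_ord kn i)) ?size_enum_ord ?(leq_trans (ltn_ord i) kn) //.
have -> : nat_of_ord i = nat_of_ord (widen_ord kn i) by [].
by rewrite nth_ord_enum tnth_mktuple.
Qed.
End Spec.
Section Final.
Variable R : realType.
Local Notation C := (R[i]).
Local Open Scope sesquilinear_scope.
Notation toC := (real_complex R).

Lemma pi_frac (a b : nat) : (0 < a)%N -> (a <= b)%N ->
  0 < (pi : R) * (a%:R / b%:R) <= (pi : R).
Proof.
move=> a0 ab; have b0 : (0 < b)%N := leq_trans a0 ab.
rewrite mulr_gt0 ?pi_gt0 ?divr_gt0 ?ltr0n //=.
rewrite -{2}[pi]mulr1 ler_wpM2l ?pi_ge0 // ler_pdivrMr ?ltr0n // mul1r ler_nat //.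
Qed.

Lemma pi_frac_lt (a b : nat) : (0 < a)%N -> (a < b)%N ->
  0 < (pi : R) * (a%:R / b%:R) < (pi : R).
Proof.
move=> a0 ab; have b0 : (0 < b)%N := leq_trans a0 (ltnW ab).
rewrite mulr_gt0 ?pi_gt0 ?divr_gt0 ?ltr0n //=.
by rewrite gtr_pMr ?pi_gt0 // ltr_pdivrMr ?ltr0n // mul1r ltr_nat.
Qed.

Lemma pi_frac_mono (a a' b : nat) : (a < a')%N -> (0 < b)%N ->
  pi * (a%:R / b%:R) < pi * (a'%:R / b%:R) :> R.
Proof.
move=> aa b0; rewrite ltr_pM2l ?pi_gt0 // ltr_pM2r ?invr_gt0 ?ltr0n //.
by rewrite ltr_nat.
Qed.

Lemma strict_mono (mu : nat -> R) n :
  (forall i j, (i < j)%N -> (j < n)%N -> mu j < mu i) ->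
  (forall i j : nat, (i <= j)%N -> (j < n)%N -> mu j <= mu i) /\
  (forall i j : 'I_n, mu i = mu j -> i = j).
Proof.
move=> H; split.
  move=> i j; rewrite leq_eqVlt => /orP[/eqP->//|ij] jn.
  exact/ltW/H.
move=> i j e; apply/val_inj/eqP; case: ltngtP => // h.
- by have := H _ _ h (ltn_ord j); rewrite e ltxx.
- by have := H _ _ h (ltn_ord i); rewrite e ltxx.
Qed.

Lemma cos_strict (x y : R) : 0 <= x -> x < y -> y <= pi -> cos y < cos x.
Proof.
move=> x0 xy ypi; rewrite ltr_cos // in_itv /=; apply/andP; split; lra.
Qed.

End Final.

Theorem theorem4p4 (R : realType) (n : nat) (alpha : R) (s : seq R) (k : nat) :
  eigen_list (A_alpha alpha (path_adj R n)) s ->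
  (1 <= k <= n)%N ->
  (0 <= alpha < 1 / 2 ->
     S_k k s <= 2 * alpha * k%:R + alpha - 1
       + alpha * csc (pi / (2 * n%:R)) * sin ((2 * k%:R + 1) * pi / (2 * n%:R))
       + (1 - 2 * alpha) * csc (pi / (2 * (n%:R + 1)))
           * sin ((2 * k%:R + 1) * pi / (2 * (n%:R + 1)))) /\
  (1 / 2 <= alpha <= 1 ->
     S_k k s <= 2 * alpha * k%:R
       + (1 - alpha) * (csc (pi / (2 * n%:R)) * sin ((2 * k%:R + 1) * pi / (2 * n%:R)) - 1)).
Proof.
move=> [_ Hc] /andP[k1 kn].
have n0 : (0 < n)%N := leq_trans k1 kn.
have kk : (0 < k <= n)%N by rewrite k1 kn.
set N := path_adj R n.
set Dg := deg_mx N.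
have Nsym : N^T = N := adj_sym R n.
set M := A_alpha alpha N.
have Msym : M^T = M.
  apply/matrixP => i j; rewrite !mxE.
  by case: (eqVneq i j) => [->|ij] //; rewrite !mulr0n orbC.
have [V [VV Htr]] := @exists_V R n k M s Msym Hc kn.
pose bA : R := pi / (2 * (n%:R + 1)).
pose bQ : R := pi / (2 * n%:R).
pose muA (m : nat) := 2 * cos (m.+1%:R * (2 * bA)).
pose muQ (m : nat) := 2 + 2 * cos (2 * (m.+1%:R * bQ)).
have argA (m : nat) : m.+1%:R * (2 * bA) = pi * (m.+1%:R / n.+1%:R).
  by rewrite /bA -[n.+1%:R]natr1; field; rewrite natr1 pnatr_eq0.
have argQ (m : nat) : 2 * (m.+1%:R * bQ) = pi * (m.+1%:R / n%:R).
  by rewrite /bQ; field; rewrite pnatr_eq0 -lt0n n0.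
have sA : sin bA != 0.
  have -> : bA = pi * (1%:R / (2 * n.+1)%:R).
    by rewrite /bA natrM -[n.+1%:R]natr1; field; rewrite natr1 pnatr_eq0.
  by rewrite gt_eqF // sin_gt0_pi // (@pi_frac_lt R 1 (2 * n.+1)) // mul2n doubleS.
have sQ : sin bQ != 0.
  have -> : bQ = pi * (1%:R / (2 * n)%:R).
    by rewrite /bQ natrM; field; rewrite pnatr_eq0 -lt0n.
  have h : (1 < 2 * n)%N by rewrite mul2n -addnn; exact: (leq_add n0 n0).
  by rewrite gt_eqF // sin_gt0_pi // (@pi_frac_lt R 1 (2 * n)).
have ord0n : 'I_n := Ordinal n0.
have [monoA injA] : (forall i j : nat, (i <= j)%N -> (j < n)%N -> muA j <= muA i) /\
                    (forall i j : 'I_n, muA i = muA j -> i = j).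
  apply: strict_mono => i j ij jn.
  rewrite /muA ltr_pM2l // !argA cos_strict //.
  - by rewrite ltW // mulr_gt0 ?pi_gt0 ?divr_gt0 ?ltr0n.
  - by rewrite pi_frac_mono.
  - by case/andP: (@pi_frac_lt R j.+1 n.+1 (ltn0Sn j) jn) => _ /ltW.
have boundA : \tr (V *m mC N *m (V^t*)%sesqui) <= real_complex R (\sum_(j < k) muA j).
  apply: (@KF_real R n k N (fun j : 'I_n => \row_(l < n) sin (l.+1%:R * (j.+1%:R * (2 * bA)))) muA V Nsym _ injA _ monoA VV kk).
  - by move=> j; rewrite eigA.
  - move=> j; apply/negP => /eqP /rowP /(_ (Ordinal n0)); rewrite !mxE /= mul1r.
    by apply/eqP; rewrite gt_eqF // argA sin_gt0_pi // (@pi_frac_lt R j.+1 n.+1 (ltn0Sn j) (ltn_ord j)).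
have [monoQ injQ] : (forall i j : nat, (i <= j)%N -> (j < n)%N -> muQ j <= muQ i) /\
                    (forall i j : 'I_n, muQ i = muQ j -> i = j).
  apply: strict_mono => i j ij jn.
  rewrite /muQ ltrD2l ltr_pM2l // !argQ cos_strict //.
  - by rewrite ltW // mulr_gt0 ?pi_gt0 ?divr_gt0 ?ltr0n.
  - by rewrite pi_frac_mono.
  - by case/andP: (@pi_frac R j.+1 n (ltn0Sn j) jn).
have Qsym : (Dg + N)^T = Dg + N.
  apply/matrixP => i0 j0; rewrite !mxE.
  by case: (eqVneq i0 j0) => [->|ij] //; rewrite !mulr0n orbC.
have boundQ : \tr (V *m mC (Dg + N) *m (V^t*)%sesqui) <= real_complex R (\sum_(j < k) muQ j).
  apply: (@KF_real R n k (Dg + N) (fun j : 'I_n => \row_(l < n) sin ((2 * l%:R + 1) * (j.+1%:R * bQ))) muQ V Qsym _ injQ _ monoQ VV kk).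
  - by move=> j; rewrite eigQ.
  - move=> j; apply/negP => /eqP /rowP /(_ (Ordinal n0)); rewrite !mxE /= mulr0 add0r mul1r.
    have h : (j.+1 < 2 * n)%N.
      by have := leq_add (ltn_ord j) n0; rewrite addn1 mul2n -addnn.
    have -> : j.+1%:R * bQ = pi * (j.+1%:R / (2 * n)%:R).
      by rewrite /bQ natrM; field; rewrite pnatr_eq0 -lt0n n0.
    by apply/eqP; rewrite gt_eqF // sin_gt0_pi // (@pi_frac_lt R j.+1 (2 * n)).
have boundD : \tr (V *m mC Dg *m (V^t*)%sesqui) <= real_complex R (2 * k%:R).
  rewrite rmorphM !rmorph_nat.
  rewrite /Dg /deg_mx /mC map_diag_mx.
  apply: Deg_bound => // j; rewrite !mxE -(rmorph_nat (real_complex R) 2) lecR degE.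
  by case: (0 < j)%N; case: (j.+1 < n)%N => /=; lra.
have trlin (a b : R) (X Y : 'M[R]_n) :
    \tr (V *m mC (a *: X + b *: Y) *m (V^t*)%sesqui) =
    real_complex R a * \tr (V *m mC X *m (V^t*)%sesqui) +
    real_complex R b * \tr (V *m mC Y *m (V^t*)%sesqui).
  by rewrite /mC map_mxD !map_mxZ mulmxDr mulmxDl -!scalemxAr -!scalemxAl mxtraceD !mxtraceZ.
have SA : \sum_(j < k) muA j = sin ((2 * k%:R + 1) * bA) / sin bA - 1.
  exact: trig_sum.
have SQ : \sum_(j < k) muQ j = 2 * k%:R + (sin ((2 * k%:R + 1) * bQ) / sin bQ - 1).
  rewrite -(@trig_sum R bQ k sQ) /muQ big_split /= sumr_const card_ord.
  congr (_ + _); first by rewrite mulr_natr.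
  by apply: eq_bigr => j _; rewrite mulrCA.
have eQ : (2 * k%:R + 1) * pi / (2 * n%:R) = (2 * k%:R + 1) * bQ by rewrite /bQ mulrA.
have eA : (2 * k%:R + 1) * pi / (2 * (n%:R + 1)) = (2 * k%:R + 1) * bA by rewrite /bA mulrA.
have toCDM (a b x y : R) : real_complex R (a * x + b * y) =
    real_complex R a * real_complex R x + real_complex R b * real_complex R y.
  by rewrite rmorphD !rmorphM.
rewrite /csc eQ eA /S_k -/bA -/bQ.
split => /andP[a0 a1].
- have HM : M = alpha *: (Dg + N) + (1 - 2 * alpha) *: N.
    apply/matrixP => i j; rewrite !mxE; ring.
  have key : real_complex R (\sum_(i < k) s`_i) <=
             real_complex R (alpha * \sum_(j < k) muQ j + (1 - 2 * alpha) * \sum_(j < k) muA j).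
    rewrite -Htr HM trlin toCDM.
    apply: lerD; apply: ler_wpM2l => //; rewrite ler0c; lra.
  move: key; rewrite lecR SA SQ => key.
  apply: (le_trans key); rewrite le_eqVlt; apply/orP; left; apply/eqP; ring.
- have HM : M = (1 - alpha) *: (Dg + N) + (2 * alpha - 1) *: Dg.
    apply/matrixP => i j; rewrite !mxE; ring.
  have key : real_complex R (\sum_(i < k) s`_i) <=
             real_complex R ((1 - alpha) * \sum_(j < k) muQ j + (2 * alpha - 1) * (2 * k%:R)).
    rewrite -Htr HM trlin toCDM.
    apply: lerD; apply: ler_wpM2l => //; rewrite ler0c; lra.
  move: key; rewrite lecR SQ => key.
  apply: (le_trans key); rewrite le_eqVlt; apply/orP; left; apply/eqP; ring.
Qed.
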